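(* Let $R$ be either $3A_1\oplus A_2\oplus A_4$ or $4A_1\oplus A_5$. Then $R$ admits an isometric embedding into neither $I_{1,9}=\langle1\rangle\oplus 9\langle-1\rangle$ nor $II_{1,9}=H\oplus E_8$. In particular, there is no rational homology projective plane $S$ with only cyclic quotient singularities, $K_S$ nef and exactly $5$ singular points, whose minimal resolution $f:S'\to S$ has exceptional lattice $R$ isomorphic to $3A_1\oplus A_2\oplus A_4$ or to $4A_1\oplus A_5$.
   Context: $A_n$, $E_8$ denote the negative definite root lattices; $H$ is the even unimodular lattice of signature $(1,1)$; $\langle k\rangle$ is the rank one lattice with generator of square $k$. A rational homology projective plane is a normal projective complex surface with the same Betti numbers as $\mathbb{CP}^2$. The exceptional lattice $R$ is the sublattice of $H^2(S',\mathbb{Z})/\mathrm{torsion}$ (cup product) spanned by the classes of all irreducible exceptional curves of $f$. *)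

(* Defs.v *)
(* Lattices are given by integer Gram matrices in a Z-basis. *)
From mathcomp Require Import all_boot all_order all_algebra.
Set Implicit Arguments. Unset Strict Implicit. Unset Printing Implicit Defensive.
Import GRing.Theory Num.Theory.
Local Open Scope ring_scope.

Definition dsum (m n : nat) (A : 'M[int]_m) (B : 'M[int]_n) : 'M[int]_(m + n) :=
  block_mx A 0 0 B.

Definition A_lat (n : nat) : 'M[int]_n :=
  \matrix_(i, j) (if i == j then (- 2%:Z)
                  else if (i.+1 == j :> nat) || (j.+1 == i :> nat) then 1%:Z else 0%:Z).

(* Dynkin diagram of E_8 (Bourbaki labelling 1..8, here shifted to 0..7):
   chain 1-3-4-5-6-7-8 with 2 attached to 4. *)
Definition E8_edge (i j : nat) : bool :=
  [|| (i == 0) && (j == 2), (i == 2) && (j == 3), (i == 3) && (j == 4),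
      (i == 4) && (j == 5), (i == 5) && (j == 6), (i == 6) && (j == 7)
    | (i == 1) && (j == 3)]%N.

Definition E8_lat : 'M[int]_8 :=
  \matrix_(i, j) (if i == j then (- 2%:Z)
                  else if E8_edge i j || E8_edge j i then 1%:Z else 0%:Z).

Definition H_lat : 'M[int]_2 :=
  \matrix_(i, j) (if i == j then 0%:Z else 1%:Z).

Definition rk1 (k : int) : 'M[int]_1 := k%:M.

Definition I_1_9 : 'M[int]_(1 + 9) := dsum (rk1 1) (- (1%:M : 'M[int]_9)).

Definition II_1_9 : 'M[int]_(2 + 8) := dsum H_lat E8_lat.

Definition R1 : 'M[int]_(1 + 1 + 1 + 2 + 4) :=
  dsum (dsum (dsum (dsum (A_lat 1) (A_lat 1)) (A_lat 1)) (A_lat 2)) (A_lat 4).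

Definition R2 : 'M[int]_(1 + 1 + 1 + 1 + 5) :=
  dsum (dsum (dsum (dsum (A_lat 1) (A_lat 1)) (A_lat 1)) (A_lat 1)) (A_lat 5).

(* Isometric embedding of the lattice with Gram matrix A into the one with Gram
   matrix B: an injective Z-linear map (row i of M = image of i-th basis vector)
   preserving the bilinear forms. *)
Definition isometric_embedding (m n : nat) (A : 'M[int]_m) (B : 'M[int]_n) : Prop :=
  exists M : 'M[int]_(m, n),
    M *m B *m M^T = A /\ (forall v : 'rV[int]_m, v *m M = 0 -> v = 0).

(* Main.v *)
Require Import Defs.
From mathcomp Require Import all_boot all_order all_algebra.
Set Implicit Arguments. Unset Strict Implicit. Unset Printing Implicit Defensive.
Import GRing.Theory.
Local Open Scope ring_scope.

Definition mxf {R : Type} m n (f : nat -> nat -> R) : 'M[R]_(m,n) := \matrix_(i<m, j<n) f i j.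
Definition lsum {R : nmodType} n (h : nat -> R) : R := foldr (fun k acc => h k + acc) 0 (iota 0 n).

Lemma sum_lsum (R : nmodType) n (h : nat -> R) : \sum_(k < n) h k = lsum n h.
Proof. by rewrite -(big_mkord xpredT h) unlock /index_iota subn0. Qed.

Lemma mulmx_mxf (R : pzSemiRingType) m n p (f : nat -> nat -> R) g :
  mxf m n f *m mxf n p g = mxf m p (fun i j => lsum n (fun k => f i k * g k j)).
Proof.
apply/matrixP => i j; rewrite !mxE -sum_lsum; apply: eq_bigr => k _; by rewrite !mxE.
Qed.

Lemma trmx_mxf (R : Type) m n (f : nat -> nat -> R) : (mxf m n f)^T = mxf n m (fun i j => f j i).
Proof. by apply/matrixP => i j; rewrite !mxE. Qed.

Lemma map_mxf (R S : Type) (phi : R -> S) m n (f : nat -> nat -> R) :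
  map_mx phi (mxf m n f) = mxf m n (fun i j => phi (f i j)).
Proof. by apply/matrixP => i j; rewrite !mxE. Qed.

Definition allmx {R : eqType} m n (f g : nat -> nat -> R) :=
  all (fun i => all (fun j => f i j == g i j) (iota 0 n)) (iota 0 m).

Lemma mxf_eqP (R : eqType) m n (f g : nat -> nat -> R) :
  allmx m n f g -> mxf m n f = mxf m n g.
Proof.
move=> /allP H; apply/matrixP => i j; rewrite !mxE.
have /H /allP Hi : (val i \in iota 0 m) by rewrite mem_iota /= ltn_ord.
by apply/eqP/Hi; rewrite mem_iota /= ltn_ord.
Qed.

Lemma dsum_mxf m n (f g : nat -> nat -> int) :
  dsum (mxf m m f) (mxf n n g) =
  mxf (m + n) (m + n) (fun i j => if (i < m)%N then (if (j < m)%N then f i j else 0)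
                                 else if (j < m)%N then 0 else g (i - m)%N (j - m)%N).
Proof.
apply/matrixP => i j; rewrite /dsum /mxf !mxE.
case: splitP => i' Ei; rewrite !mxE; case: splitP => j' Ej; rewrite !mxE //.
- by rewrite Ei Ej.
- by rewrite Ei Ej !addKn.
Qed.

Definition afun (i j : nat) : int :=
  if i == j then - 2%:Z else if (i.+1 == j) || (j.+1 == i) then 1 else 0.
Lemma A_mxf n : A_lat n = mxf n n afun.
Proof. by apply/matrixP => i j; rewrite !mxE. Qed.

Definition e8fun (i j : nat) : int :=
  if i == j then - 2%:Z else if E8_edge i j || E8_edge j i then 1 else 0.
Lemma E8_mxf : E8_lat = mxf 8 8 e8fun.
Proof. by apply/matrixP => i j; rewrite !mxE. Qed.

Lemma H_mxf : H_lat = mxf 2 2 (fun i j => if i == j then 0 else 1).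
Proof. by apply/matrixP => i j; rewrite !mxE. Qed.

Lemma rk1_mxf k : rk1 k = mxf 1 1 (fun _ _ => k).
Proof. by apply/matrixP => i j; rewrite /rk1 /mxf !mxE !ord1 eqxx mulr1n. Qed.

Lemma m1_mxf n : - (1%:M : 'M[int]_n) = mxf n n (fun i j => if i == j then -1 else 0).
Proof.
apply/matrixP => i j; rewrite /mxf !mxE; change (nat_of_ord i == nat_of_ord j) with (i == j).
by case: (i == j); rewrite ?mulr1n ?mulr0n ?oppr0.
Qed.

Lemma diag_mxf (R : pzSemiRingType) n (h : nat -> nat -> R) :
  diag_mx (mxf 1 n h) = mxf n n (fun i j => if i == j then h 0 i else 0).
Proof.
apply/matrixP => i j; rewrite /mxf !mxE; change (nat_of_ord i == nat_of_ord j) with (i == j).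
by case: (i == j); rewrite ?mulr1n ?mulr0n ?oppr0.
Qed.

Definition F := 'F_3.
Notation phi := (@intmul F 1 : int -> F).
Definition Lf {R : nmodType} (l : seq (seq R)) (i j : nat) : R := nth 0 (nth [::] l i) j.


Definition T1 : 'M[int]_(8,9) := mxf 8 9 (Lf
 [:: [:: 1;0;0;0;0;0;0;0;0];
     [:: 0;1;0;0;0;0;0;0;0];
     [:: 0;0;1;0;0;0;0;0;0];
     [:: 0;0;0;1;0;0;0;0;0];
     [:: 0;0;0;0;0;1;0;0;0];
     [:: 0;0;0;0;0;0;0;1;0];
     [:: 0;0;0;0;0;2;1;2;0];
     [:: 0;0;0;0;0;1;2;0;1]]).
Definition nn1 : 'rV[F]_8 := mxf 1 8 (Lf [:: [:: 1;1;1;1;1;1;2;1]]).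

Lemma mapG (m n : nat) (T : 'M[int]_(m,n)) (R : 'M[int]_n) :
  map_mx phi T *m map_mx phi R *m (map_mx phi T)^T = map_mx phi (T *m R *m T^T).
Proof. by rewrite !map_mxM map_trmx. Qed.

Lemma T1_ok : map_mx phi T1 *m map_mx phi R1 *m (map_mx phi T1)^T = diag_mx nn1.
Proof.
rewrite mapG /R1 !A_mxf !dsum_mxf /T1 /nn1 trmx_mxf !mulmx_mxf map_mxf diag_mxf.
apply: mxf_eqP. by vm_compute.
Qed.

Lemma nn1_prod : \prod_i nn1 0 i = 2.
Proof. rewrite /nn1 !big_ord_recr big_ord0 /= !mxE. by apply/eqP. Qed.

Definition kz1 : 'rV[int]_9 := mxf 1 9 (Lf [:: [:: 0;0;0;1;2;0;0;0;0]]).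
Lemma zero_mxf (R : nmodType) m n : (0 : 'M[R]_(m,n)) = mxf m n (fun _ _ => 0).
Proof. by apply/matrixP => i j; rewrite !mxE. Qed.

Lemma kz1_ok : map_mx phi (kz1 *m R1) = 0.
Proof.
rewrite /R1 !A_mxf !dsum_mxf /kz1 !mulmx_mxf map_mxf zero_mxf.
apply: mxf_eqP. by vm_compute.
Qed.

Lemma kz1_nd : ~~ (9 %| (kz1 *m R1 *m kz1^T) ord0 ord0)%Z.
Proof.
rewrite /R1 !A_mxf !dsum_mxf /kz1 trmx_mxf !mulmx_mxf /mxf mxE. by vm_compute.
Qed.

Lemma I_sym : I_1_9^T = I_1_9.
Proof.
rewrite /I_1_9 rk1_mxf m1_mxf dsum_mxf trmx_mxf. apply: mxf_eqP. by vm_compute.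
Qed.

Lemma II_sym : II_1_9^T = II_1_9.
Proof.
rewrite /II_1_9 H_mxf E8_mxf dsum_mxf trmx_mxf. apply: mxf_eqP. by vm_compute.
Qed.

Definition P0I : 'M[int]_10 := mxf 10 10 (fun i j => if i == j then 1 else 0).
Definition d0I : 'rV[F]_10 := mxf 1 10 (Lf [:: [:: 1;2;2;2;2;2;2;2;2;2]]).
Lemma P0I_ok : map_mx phi P0I *m map_mx phi I_1_9 *m (map_mx phi P0I)^T = diag_mx d0I.
Proof.
rewrite mapG /I_1_9 rk1_mxf m1_mxf dsum_mxf /P0I /d0I trmx_mxf !mulmx_mxf map_mxf diag_mxf.
apply: mxf_eqP. by vm_compute.
Qed.
Lemma d0I_prod : \prod_i d0I 0 i = -1.
Proof. rewrite /d0I !big_ord_recr big_ord0 /= !mxE. by apply/eqP. Qed.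

Definition P0II : 'M[int]_10 := mxf 10 10 (Lf
 [:: [:: 1; 1; 0; 0; 0; 0; 0; 0; 0; 0]; [:: 1; 2; 0; 0; 0; 0; 0; 0; 0; 0];
     [:: 0; 0; 1; 0; 0; 0; 0; 0; 0; 0]; [:: 0; 0; 0; 1; 0; 0; 0; 0; 0; 0];
     [:: 0; 0; 0; 0; 0; 0; 1; 0; 0; 0]; [:: 0; 0; 0; 2; 0; 1; 2; 0; 0; 0];
     [:: 0; 0; 2; 2; 1; 1; 2; 0; 0; 0]; [:: 0; 0; 0; 0; 0; 0; 0; 0; 1; 0];
     [:: 0; 0; 2; 0; 1; 0; 2; 1; 2; 0]; [:: 0; 0; 1; 0; 2; 0; 1; 2; 0; 1]]).
Definition d0II : 'rV[F]_10 := mxf 1 10 (Lf [:: [:: 2;1;1;1;1;2;1;1;2;1]]).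
Lemma P0II_ok : map_mx phi P0II *m map_mx phi II_1_9 *m (map_mx phi P0II)^T = diag_mx d0II.
Proof.
rewrite mapG /II_1_9 H_mxf E8_mxf dsum_mxf /P0II /d0II trmx_mxf !mulmx_mxf map_mxf diag_mxf.
apply: mxf_eqP. by vm_compute.
Qed.
Lemma d0II_prod : \prod_i d0II 0 i = -1.
Proof. rewrite /d0II !big_ord_recr big_ord0 /= !mxE. by apply/eqP. Qed.

Lemma gram_det (K : comPzRingType) n (P G : 'M[K]_n) :
  \det (P *m G *m P^T) = \det P ^+ 2 * \det G.
Proof. by rewrite !det_mulmx det_tr expr2 mulrAC. Qed.

Lemma F3_sq (a c : F) : a ^+ 2 + c ^+ 2 = 0 -> c = 0.
Proof.
by case: a => [[|[|[|?]]] ?]; case: c => [[|[|[|?]]] ?] //= /eqP; apply/contraTeq.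
Qed.

Lemma phi0_div (z : int) : phi z = 0 -> z = (z %/ 3)%Z * 3.
Proof.
move=> hz; have hd := divz_eq z 3.
have hr0 : (0 <= z %% 3)%Z by apply: modz_ge0.
have hr3 : (z %% 3 < 3)%Z by apply: ltz_pmod.
suff : (z %% 3)%Z = 0 by move=> h; rewrite {1}hd h addr0.
move: hz; rewrite {1}hd. rewrite rmorphD rmorphM /=.
have -> : ((3 : int)%:~R : F) = 0 by apply/eqP.
rewrite mulr0 add0r.
move: hr0 hr3; case: (z %% 3)%Z => [[|[|[|k]]]|k] //= _ _ /eqP //.
Qed.

Lemma core (R : 'M[int]_9) (G : 'M[int]_10) (M : 'M[int]_(9,10))
  (kz : 'rV[int]_9) (T : 'M[F]_(8,9)) (nn : 'rV[F]_8) (P0 : 'M[F]_10) (d0 : 'rV[F]_10) :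
  M *m G *m M^T = R ->
  G^T = G ->
  P0 *m map_mx phi G *m P0^T = diag_mx d0 -> \prod_i d0 0 i = -1 ->
  map_mx phi (kz *m R) = 0 ->
  ~~ ((9 %| (kz *m R *m kz^T) ord0 ord0)%Z) ->
  T *m map_mx phi R *m T^T = diag_mx nn -> \prod_i nn 0 i = 2 ->
  False.
Proof.
move=> HR Gsym HP0 Hd0 Hk Hnd HT Hnn.
set G3 := map_mx phi G; set R3 := map_mx phi R; set M3 := map_mx phi M.
set k0 := map_mx phi kz.
have HR3 : M3 *m G3 *m M3^T = R3 by rewrite /R3 -HR !map_mxM map_trmx.
have sym3 : G3^T = G3 by rewrite /G3 map_trmx Gsym.
have xR : k0 *m R3 = 0 by rewrite /k0 /R3 -map_mxM.
set x := k0 *m M3; set Fm := T *m M3.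
have Ebil : forall m1 m2 (U : 'M_(m1,9)) (V : 'M_(m2,9)),
   (U *m M3) *m G3 *m (V *m M3)^T = U *m R3 *m V^T.
  by move=> m1 m2 U V; rewrite -HR3 trmx_mul !mulmxA.
have hxx : x *m G3 *m x^T = 0 by rewrite Ebil xR !mul0mx.
have hxF : x *m G3 *m Fm^T = 0 by rewrite Ebil xR !mul0mx.
have trB : forall m1 m2 (U : 'M_(m1,10)) (V : 'M_(m2,10)),
    (U *m G3 *m V^T)^T = V *m G3 *m U^T.
  by move=> m1 m2 U V; rewrite !trmx_mul trmxK sym3 mulmxA.
have hFx : Fm *m G3 *m x^T = 0 by rewrite -trB hxF trmx0.
have hFF : Fm *m G3 *m Fm^T = diag_mx nn by rewrite Ebil.
have hG3 : \det P0 ^+ 2 * \det G3 = -1 by rewrite -gram_det HP0 det_diag.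
have [x0|xn0] := eqVneq x 0.
  set w := kz *m M.
  have hw : forall j, phi (w ord0 j) = 0.
    by move=> j; move: x0 => /(congr1 (fun A : 'rV_10 => A ord0 j)); rewrite /x /k0 /M3 -map_mxM !mxE.
  set y := map_mx (fun z => (z %/ 3)%Z) w.
  have wy : w = (3 : int) *: y.
    by apply/matrixP => i j; rewrite ord1 [RHS]mxE [y _ _]mxE mulrC; exact: phi0_div (hw j).
  move: Hnd; rewrite -HR !mulmxA -/w -!mulmxA -trmx_mul -/w !mulmxA wy.
  rewrite -/w wy linearZ /= -scalemxAl -scalemxAl -scalemxAr scalerA mxE.
  by rewrite (@dvdz_mulr 9 (3 * 3)).
have nn0 : forall i, nn 0 i != 0.
  move=> i; apply: contraTneq isT => h.
  have : \prod_i nn 0 i = 0 by rewrite (bigD1 i) //= h mul0r.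
  by rewrite Hnn => /eqP.
set Q := col_mx x Fm.
have hQ : Q *m G3 *m Q^T = block_mx 0 0 0 (diag_mx nn).
  by rewrite tr_col_mx mul_col_mx mul_col_row hxx hxF hFx hFF.
have Qfree : row_free Q.
  apply: inj_row_free => v Hv.
  rewrite -[v]hsubmxK in Hv *.
  have h1 : row_mx (lsubmx v) (rsubmx v) *m (Q *m G3 *m Q^T) = 0.
    by rewrite !mulmxA Hv !mul0mx.
  rewrite hQ mul_row_block !mulmx0 !addr0 add0r -row_mx0 in h1.
  have [_ h2] := eq_row_mx h1.
  have vr0 : rsubmx v = 0.
    apply/matrixP => i j; move/matrixP: h2 => /(_ i j).
    rewrite mul_mx_diag !mxE ord1 => /eqP; rewrite mulf_eq0 (negbTE (nn0 j)) orbF; exact/eqP.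
  rewrite vr0 in Hv *; rewrite mul_row_col mul0mx addr0 in Hv.
  rewrite [lsubmx v]mx11_scalar mul_scalar_mx in Hv.
  move/eqP: Hv; rewrite scalemx_eq0 (negbTE xn0) orbF => /eqP h0.
  by rewrite [lsubmx v]mx11_scalar h0 raddf0 row_mx0.
have G3u : G3 \in unitmx.
  rewrite unitmxE unitfE; apply: contraTneq isT => h.
  by move: hG3; rewrite h mulr0 => /eqP.
have Bfull : row_full (Q *m G3^T)^T.
  by rewrite /row_full mxrank_tr mxrankMfree ?row_free_unit ?unitmx_tr // (eqP Qfree).
have [y0 Hy0] := submxP (submx_full (row_mx (1 : 'M[F]_1) (0 : 'M_(1,8))) Bfull).
rewrite trmx_mul trmxK mulmxA /Q tr_col_mx mul_mx_row in Hy0.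
have [hy0x hy0F] := eq_row_mx Hy0.
set c := (y0 *m G3 *m y0^T) 0 0.
set y := y0 + c *: x.
have bDl : forall k (u v : 'rV_10) (W : 'M_(k,10)),
    (u + v) *m G3 *m W^T = u *m G3 *m W^T + v *m G3 *m W^T.
  by move=> k u v W; rewrite !mulmxDl.
have bZl : forall k a (u : 'rV_10) (W : 'M_(k,10)),
    (a *: u) *m G3 *m W^T = a *: (u *m G3 *m W^T).
  by move=> k a u W; rewrite -!scalemxAl.
have hyx : y *m G3 *m x^T = 1 by rewrite bDl bZl hxx scaler0 addr0 -hy0x.
have hxy : x *m G3 *m y^T = 1 by rewrite -trB hyx trmx1.
have hyF : y *m G3 *m Fm^T = 0 by rewrite bDl bZl hxF scaler0 addr0 -hy0F.
have hFy : Fm *m G3 *m y^T = 0 by rewrite -trB hyF trmx0.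
have hxy0 : x *m G3 *m y0^T = 1 by rewrite -trB -hy0x trmx1.
have hyy : y *m G3 *m y^T = 0.
  rewrite bDl bZl hxy -trB bDl bZl hxy0 [y0 *m G3 *m y0^T]mx11_scalar -/c.
  rewrite -scalemx1 -scalerDl linearZ /= trmx1 -scalerDl.
  have -> : c + c + c = 0.
    have -> : c + c + c = c * (1 + 1 + 1) by rewrite !mulrDr mulr1.
    have h3 : (1 + 1 + 1 : F) = 0 by apply/eqP.
    by rewrite h3 mulr0.
  by rewrite scale0r.
clearbody y.
have bDr : forall k (u v : 'rV_10) (W : 'M_(k,10)),
    W *m G3 *m (u + v)^T = W *m G3 *m u^T + W *m G3 *m v^T.
  by move=> k u v W; rewrite linearD /= mulmxDr.
have bBr : forall k (u v : 'rV_10) (W : 'M_(k,10)),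
    W *m G3 *m (u - v)^T = W *m G3 *m u^T - W *m G3 *m v^T.
  by move=> k u v W; rewrite linearB /= mulmxBr.
have bBl : forall k (u v : 'rV_10) (W : 'M_(k,10)),
    (u - v) *m G3 *m W^T = u *m G3 *m W^T - v *m G3 *m W^T.
  by move=> k u v W; rewrite !mulmxBl.
set P := col_mx (col_mx (x + y) (x - y)) Fm.
have hP : \det (P *m G3 *m P^T) = 1.
  rewrite /P tr_col_mx (mul_col_mx (col_mx _ _)) mul_col_row.
  rewrite (tr_col_mx (x + y)) !mul_mx_row mul_col_mx !mul_col_mx -block_mxEh.
  rewrite !bBr !bDr hFx hFy subrr addr0 row_mx0 det_ublock.
  rewrite !bBl !bDl hxx hxy hyx hyy !add0r !addr0 !subr0 addNr det_ublock.
  rewrite hFF det_diag Hnn !det_mx11 !mxE /=.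
  by apply/eqP.
rewrite gram_det in hP.
have e : \det P ^+ 2 + \det P0 ^+ 2 = 0.
  have -> : \det P0 ^+ 2 = \det P0 ^+ 2 * (\det P ^+ 2 * \det G3) by rewrite hP mulr1.
  by rewrite mulrCA hG3 mulrN1 subrr.
move: hG3; rewrite (F3_sq e) expr0n mul0r => /eqP.
by apply/negP; apply/eqP.
Qed.

Definition T2 : 'M[int]_(8,9) := mxf 8 9 (Lf
 [:: [:: 1;0;0;0;0;0;0;0;0];
     [:: 0;1;0;0;0;0;0;0;0];
     [:: 0;0;1;0;0;0;0;0;0];
     [:: 0;0;0;1;0;0;0;0;0];
     [:: 0;0;0;0;1;0;0;0;0];
     [:: 0;0;0;0;0;0;1;0;0];
     [:: 0;0;0;0;2;1;2;0;0];
     [:: 0;0;0;0;1;2;0;1;0]]).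

Lemma T2_ok : map_mx phi T2 *m map_mx phi R2 *m (map_mx phi T2)^T = diag_mx nn1.
Proof.
rewrite mapG /R2 !A_mxf !dsum_mxf /T2 /nn1 trmx_mxf !mulmx_mxf map_mxf diag_mxf.
apply: mxf_eqP. by vm_compute.
Qed.

Definition kz2 : 'rV[int]_9 := mxf 1 9 (Lf [:: [:: 0;0;0;0;1;2;0;1;2]]).

Lemma kz2_ok : map_mx phi (kz2 *m R2) = 0.
Proof.
rewrite /R2 !A_mxf !dsum_mxf /kz2 !mulmx_mxf map_mxf zero_mxf.
apply: mxf_eqP. by vm_compute.
Qed.

Lemma kz2_nd : ~~ (9 %| (kz2 *m R2 *m kz2^T) ord0 ord0)%Z.
Proof.
rewrite /R2 !A_mxf !dsum_mxf /kz2 trmx_mxf !mulmx_mxf /mxf mxE. by vm_compute.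
Qed.

Theorem lemma6p8 :
  (~ isometric_embedding R1 I_1_9 /\ ~ isometric_embedding R1 II_1_9) /\
  (~ isometric_embedding R2 I_1_9 /\ ~ isometric_embedding R2 II_1_9).
Proof.
split; split; move=> [M [HM _]].
- exact: (core HM I_sym P0I_ok d0I_prod kz1_ok kz1_nd T1_ok nn1_prod).
- exact: (core HM II_sym P0II_ok d0II_prod kz1_ok kz1_nd T1_ok nn1_prod).
- exact: (core HM I_sym P0I_ok d0I_prod kz2_ok kz2_nd T2_ok nn1_prod).
- exact: (core HM II_sym P0II_ok d0II_prod kz2_ok kz2_nd T2_ok nn1_prod).
Qed.
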